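(* Let $(N,C,\mathbf{A},k)$ be an instance with $|N|=n$ having at least one cohesive group, and let $c_{\max}$ be its maximum EJR degree. If $n>k(k+1)^2(c_{\max}-1)$, then every committee output by $\frac{n}{k(k+1)}$-LS-PAV (i.e., $\lambda$-LS-PAV with $\lambda=\frac{n}{k(k+1)}$, from any initial committee) has EJR degree $c_{\max}$.
   Context: An instance consists of voters $N=\{1,\dots,n\}$, candidates $C$, approval ballots $A_i\subseteq C$ for $i\in N$, and a committee size $k$ with $1\le k\le|C|$. For $\ell\in\mathbb{N}$, $N'\subseteq N$ is an $\ell$-cohesive group if $|N'|\ge\ell n/k$ and $|\bigcap_{i\in N'}A_i|\ge\ell$ (a cohesive group is a $1$-cohesive group). A size-$k$ committee $W$ achieves EJR degree $c$ if for every $\ell\in\{1,\dots,k\}$ every $\ell$-cohesive group contains at least $c$ voters $i$ with $|A_i\cap W|\ge\ell$; its EJR degree is the largest such $c$, and the maximum EJR degree of the instance is the maximum over all size-$k$ committees. The PAV-score of $W$ is $s_{\mathrm{PAV}}(W)=\sum_{i=1}^n\sum_{j=1}^{|A_i\cap W|}\frac1j$, and $\Delta(W,c^+,c^-)=s_{\mathrm{PAV}}((W\setminus\{c^-\})\cup\{c^+\})-s_{\mathrm{PAV}}(W)$. The algorithm $\lambda$-LS-PAV starts from an arbitrary size-$k$ committee $W$ and, while there exist $c^+\notin W$ and $c^-\in W$ with $\Delta(W,c^+,c^-)\ge\lambda$, replaces $W$ by $(W\setminus\{c^-\})\cup\{c^+\}$; it then outputs $W$. *)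

(* Defs.v *)
From mathcomp Require Import all_boot all_order all_algebra.
Set Implicit Arguments. Unset Strict Implicit. Unset Printing Implicit Defensive.
Import Order.TTheory GRing.Theory Num.Theory.

Section Elections.
Variables (C : finType) (n : nat) (A : 'I_n -> {set C}) (k : nat).

Definition cohesive (l : nat) (N' : {set 'I_n}) : bool :=
  (l * n <= #|N'| * k)%N && (l <= #|\bigcap_(i in N') A i|)%N.

Definition committee (W : {set C}) : Prop := #|W| = k.

Definition achieves_ejr (W : {set C}) (c : nat) : Prop :=
  forall l : nat, (1 <= l <= k)%N -> forall N' : {set 'I_n}, cohesive l N' ->
    (c <= #|[set i in N' | l <= #|A i :&: W| ]|)%N.

Definition ejr_degree (W : {set C}) (c : nat) : Prop :=
  achieves_ejr W c /\ forall c', achieves_ejr W c' -> (c' <= c)%N.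

Definition max_ejr_degree (cmax : nat) : Prop :=
  (exists W, committee W /\ ejr_degree W cmax) /\
  (forall W d, committee W -> ejr_degree W d -> (d <= cmax)%N).

Local Open Scope ring_scope.

Definition pav_score (W : {set C}) : rat :=
  \sum_(i < n) \sum_(j < #|A i :&: W|) (j.+1)%:R^-1.

Definition delta (W : {set C}) (cp cm : C) : rat :=
  pav_score ((W :\ cm) :|: [set cp]) - pav_score W.

Definition ls_step (lam : rat) (W W' : {set C}) : Prop :=
  exists cp cm, cp \notin W /\ cm \in W /\ lam <= delta W cp cm /\
    W' = (W :\ cm) :|: [set cp].

Inductive ls_reach (lam : rat) : {set C} -> {set C} -> Prop :=
| ls_refl W : ls_reach lam W W
| ls_next W1 W2 W3 : ls_step lam W1 W2 -> ls_reach lam W2 W3 -> ls_reach lam W1 W3.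

Definition ls_pav_output (lam : rat) (W : {set C}) : Prop :=
  exists W0, committee W0 /\ ls_reach lam W0 W /\
    ~ (exists cp cm, cp \notin W /\ cm \in W /\ lam <= delta W cp cm).

End Elections.

(* Main.v *)
Require Import Defs.
From mathcomp Require Import all_boot all_order all_algebra.
From mathcomp Require Import ring lra zify.
Import Order.TTheory GRing.Theory Num.Theory.
Local Open Scope ring_scope.

Definition H (m : nat) : rat := \sum_(j < m) (j.+1)%:R^-1.

Lemma HS m : H m.+1 = H m + (m.+1)%:R^-1.
Proof. by rewrite /H big_ord_recr. Qed.

Lemma card_swap (C : finType) (S W : {set C}) c cm :
  c \notin W ->
  #|S :&: ((W :\ cm) :|: [set c])| = ((c \in S) + #|(S :&: W) :\ cm|)%N.
Proof.
move=> cW.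
have [cS|cS] := boolP (c \in S).
  have -> : S :&: ((W :\ cm) :|: [set c]) = c |: ((S :&: W) :\ cm).
    apply/setP=> x; rewrite !inE.
    have [->|] := eqVneq x c; first by rewrite cS orbT.
    by move=> _ /=; rewrite orbF; case: (x \in S); case: (x == cm).
  by rewrite cardsU1 !inE (negbTE cW) !andbF.
have -> : S :&: ((W :\ cm) :|: [set c]) = ((S :&: W) :\ cm).
  apply/setP=> x; rewrite !inE.
  have [->|] := eqVneq x c; first by move: cS; case: (c \in S) => /=; rewrite ?andbF.
  by move=> _ /=; rewrite orbF; case: (x \in S); case: (x == cm).
done.
Qed.

Lemma voter_diff (C : finType) (S W : {set C}) c cm :
  c \notin W -> cm \in W ->
  H #|S :&: ((W :\ cm) :|: [set c])| - H #|S :&: W| =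
  if c \in S then (if cm \in S then 0 else (#|S :&: W|.+1)%:R^-1)
  else (if cm \in S then - (#|S :&: W|%:R^-1) else 0).
Proof.
move=> cW cmW.
rewrite card_swap // [#|S :&: W|](cardsD1 cm) !inE cmW andbT.
case: (c \in S); case: (cm \in S) => /=; rewrite ?add0n ?add1n ?subrr //.
- by rewrite HS addrAC subrr add0r.
- by rewrite HS opprD addrA subrr add0r.
Qed.

Lemma voter_sum (C : finType) (S W : {set C}) c :
  c \notin W ->
  (if c \in S then (#|W|.+1)%:R / (#|S :&: W|.+1)%:R else 0) - 1 <=
  \sum_(cm in W) (H #|S :&: ((W :\ cm) :|: [set c])| - H #|S :&: W|).
Proof.
move=> cW.
rewrite (eq_bigr (fun cm => if c \in S then (if cm \in S then 0 else (#|S :&: W|.+1)%:R^-1)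
  else (if cm \in S then - (#|S :&: W|%:R^-1) else 0))); last by move=> cm cmW; rewrite voter_diff.
rewrite (big_setID S) /=.
rewrite (eq_bigr (fun _ => if c \in S then 0 else - (#|S :&: W|%:R^-1))); last first.
  by move=> cm; rewrite inE => /andP[_ ->].
rewrite [X in _ <= _ + X](eq_bigr (fun _ => if c \in S then (#|S :&: W|.+1)%:R^-1 else 0)); last first.
  by move=> cm; rewrite inE => /andP[/negbTE -> _].
rewrite !sumr_const cardsD [W :&: S]setIC.
have mk : (#|S :&: W| <= #|W|)%N by apply: subset_leq_card; apply: subsetIr.
set m := #|S :&: W| in mk *; set k := #|W| in mk *.
case: (c \in S).
  rewrite mul0rn add0r -[_ *+ (k - m)]mulr_natr natrB //.
  have hm : (m.+1)%:R != 0 :> rat by rewrite pnatr_eq0.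
  rewrite le_eqVlt; apply/orP; left; apply/eqP. clearbody m k. move: hm; rewrite -[m.+1]addn1 -[k.+1]addn1 !natrD => hm. field. done.
rewrite mul0rn addr0.
case: m mk => [|m] _; first by rewrite mulr0n sub0r lerN10.
rewrite mulNrn -[_ *+ m.+1]mulr_natr mulVf ?pnatr_eq0 //.
Qed.

Lemma sum_delta (C : finType) n (A : 'I_n -> {set C}) (W : {set C}) c : c \notin W ->
  \sum_(i < n) (if c \in A i then (#|W|.+1)%:R / (#|A i :&: W|.+1)%:R else 0) - n%:R
  <= \sum_(cm in W) delta A W c cm.
Proof.
move=> cW.
rewrite /delta /pav_score.
under [X in _ <= X]eq_bigr do rewrite -sumrB.
rewrite exchange_big /=.
have -> : n%:R = \sum_(i < n) (1:rat) by rewrite sumr_const card_ord.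
rewrite -sumrB; apply: ler_sum => i _.
exact: voter_sum.
Qed.

Lemma arith (a N p x L cm : rat) : 1 <= a -> 1 <= L -> 0 <= N ->
  (p - x) * (a+1)^+2 <= N * L * (a+2) -> L * N <= p * a -> x <= cm - 1 ->
  a * (a+1)^+2 * (cm - 1) < N -> False.
Proof.
move=> ha hL hN h1 h2 h3 h4.
have e1 : a * ((p - x) * (a+1)^+2) <= a * (N * L * (a+2)) by rewrite ler_pM2l //; lra.
have e2 : (a+1)^+2 * (L * N) <= (a+1)^+2 * (p * a) by rewrite ler_pM2l //; nra.
have e3 : a * (a+1)^+2 * x <= a * (a+1)^+2 * (cm - 1) by rewrite ler_pM2l //; nra.
have e4 : N <= L * N by nra.
nra.
Qed.

Lemma fe0 (n k : rat) : k != 0 -> k + 1 != 0 -> n / (k * (k + 1)) * k = n / (k + 1).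
Proof. by move=> h1 h2; field; rewrite ?h1 ?h2. Qed.
Lemma fE1 (l k d : rat) : l != 0 -> l * (k + 1) * ((k + 1) / l * d) = d * (k + 1) ^+ 2.
Proof. by move=> h1; field; rewrite ?h1. Qed.
Lemma fE2 (l k n : rat) : k + 1 != 0 -> l * (k + 1) * (n + n / (k + 1)) = n * l * (k + 2).
Proof. by move=> h1; field; rewrite ?h1. Qed.

Lemma local_ejr (C : finType) n (A : 'I_n -> {set C}) k (W : {set C}) cmax l (N' : {set 'I_n}) :
  (1 <= k)%N -> #|W| = k ->
  (forall cp cm, cp \notin W -> cm \in W -> delta A W cp cm < n%:R / (k%:R * (k.+1)%:R)) ->
  (1 <= l <= k)%N -> cohesive A k l N' -> (cmax <= #|N'|)%N ->
  k%:R * (k.+1)%:R ^+ 2 * (cmax%:R - 1) < n%:R :> rat ->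
  (cmax <= #|[set i in N' | l <= #|A i :&: W| ]|)%N.
Proof.
move=> k1 Wk opt /andP[l1 lk] /andP[coh1 coh2] cN hyp.
set X := [set i in N' | _].
have XN : X \subset N' by apply/subsetP => i; rewrite inE => /andP[].
case: (boolP (\bigcap_(i in N') A i \subset W)) => [sub | /subsetPn [c cI cW]].
  apply: (leq_trans cN); apply: subset_leq_card; apply/subsetP => i iN.
  rewrite inE iN /=; apply: (leq_trans coh2); apply: subset_leq_card.
  apply/subsetP => x xI; rewrite inE (subsetP sub _ xI) andbT.
  by move/bigcapP: xI; apply.
have h1 : \sum_(cm in W) delta A W c cm <= (n%:R / (k%:R * (k.+1)%:R)) *+ k.
  rewrite -[X in _ *+ X]Wk -sumr_const; apply: ler_sum => cm cmW; apply: ltW; exact: opt.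
have h2 := @sum_delta C n A W c cW.
set Y := N' :\: X.
have h3 : ((k.+1)%:R / l%:R) *+ #|Y| <=
   \sum_(i < n) (if c \in A i then (#|W|.+1)%:R / (#|A i :&: W|.+1)%:R else 0 : rat).
  rewrite -sumr_const big_mkcond /=; apply: ler_sum => i _.
  case: ifP => iY.
    move: iY; rewrite !inE => /andP[iX iN]; rewrite iN /= -ltnNge in iX.
    have -> : c \in A i by move/bigcapP: cI; apply.
    rewrite Wk ler_pM2l ?ltr0n // lef_pV2 ?posrE ?ltr0n // ?ler_nat //.
  by case: (c \in A i) => //; rewrite divr_ge0.
have h4 : #|Y| = (#|N'| - #|X|)%N by rewrite cardsDS.
have XN' : (#|X| <= #|N'|)%N by apply: subset_leq_card.
rewrite leqNgt; apply/negP => hx.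
have hx' : #|X|%:R <= cmax%:R - 1 :> rat.
  by rewrite lerBrDr natr1 ler_nat.
have hk : 1 <= k%:R :> rat by rewrite ler1n.
have hl : 1 <= l%:R :> rat by rewrite ler1n.
have hc : (l * n <= #|N'| * k)%N by [].
have hc' : l%:R * n%:R <= #|N'|%:R * k%:R :> rat by rewrite -!natrM ler_nat.
move: hyp; rewrite -natr1 => hyp.
apply: (arith _ _ _ _ _ _ hk hl _ _ hc' hx' hyp); first exact: ler0n.
rewrite Wk in h2 h3.
rewrite h4 -[_ *+ (_ - _)%N]mulr_natr natrB // in h3.
have e0 : (n%:R / (k%:R * (k.+1)%:R)) *+ k = n%:R / (k%:R + 1) :> rat.
  rewrite -[_ *+ k]mulr_natr -natr1.
  have k0 : k%:R != 0 :> rat by rewrite pnatr_eq0 -lt0n.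
  have k1' : k%:R + 1 != 0 :> rat by rewrite natr1 pnatr_eq0.
  exact: fe0.
rewrite e0 in h1.
have e : (k.+1)%:R / l%:R * (#|N'|%:R - #|X|%:R) <= n%:R + n%:R / (k%:R + 1) :> rat.
  apply: (le_trans h3); rewrite addrC -lerBlDr; exact: (le_trans h2 h1).
have lpos : 0 < l%:R * (k%:R + 1) :> rat.
  by rewrite mulr_gt0 // ?ltr0n // natr1 ltr0n.
rewrite -(ler_pM2l lpos) in e.
have l0 : l%:R != 0 :> rat by rewrite pnatr_eq0 -lt0n.
have k1' : k%:R + 1 != 0 :> rat by rewrite natr1 pnatr_eq0.
have E1 : l%:R * (k%:R + 1) * ((k.+1)%:R / l%:R * (#|N'|%:R - #|X|%:R))
   = (#|N'|%:R - #|X|%:R) * (k%:R + 1) ^+ 2 :> rat.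
  by rewrite -natr1; apply: fE1.
have E2 : l%:R * (k%:R + 1) * (n%:R + n%:R / (k%:R + 1)) = n%:R * l%:R * (k%:R + 2) :> rat.
  exact: fE2.
by rewrite -E1 -E2.
Qed.

Lemma reach_card (C : finType) n (A : 'I_n -> {set C}) k lam (W0 W : {set C}) :
  ls_reach A lam W0 W -> #|W0| = k -> #|W| = k.
Proof.
elim=> // W1 W2 W3 [cp [cm [cpW [cmW [_ ->]]]]] _ IH hk; apply: IH.
rewrite setUC cardsU1 !inE (negbTE cpW) andbF /=.
by rewrite -hk (cardsD1 cm W1) cmW add1n.
Qed.

From Stdlib Require Import ClassicalEpsilon.

Theorem corollary2 (C : finType) (n : nat) (A : 'I_n -> {set C}) (k : nat)
  (cmax : nat) :
  (1 <= k)%N -> (k <= #|C|)%N ->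
  (exists N' : {set 'I_n}, cohesive A k 1 N') ->
  max_ejr_degree A k cmax ->
  (k%:R * (k.+1)%:R ^+ 2 * (cmax%:R - 1) < n%:R :> rat) ->
  forall W : {set C},
    ls_pav_output A k (n%:R / (k%:R * (k.+1)%:R)) W ->
    ejr_degree A k W cmax.
Proof.
move=> k1 kC [N0 coh0] [[Ws [Wsk [Wsach Wsmax]]] maxc] hyp W [W0 [W0k [reach nopt]]].
have Wk : #|W| = k := @reach_card C n A k _ W0 W reach W0k.
have opt : forall cp cm, cp \notin W -> cm \in W ->
    delta A W cp cm < n%:R / (k%:R * (k.+1)%:R).
  move=> cp cm cpW cmW; rewrite ltNge; apply/negP => hle.
  by apply: nopt; exists cp, cm.
have ach : achieves_ejr A k W cmax.
  move=> l hl N' coh.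
  apply: (@local_ejr C n A k W cmax l N' k1 Wk opt hl coh _ hyp).
  apply: (leq_trans (Wsach l hl N' coh)); apply: subset_leq_card.
  by apply/subsetP => i; rewrite inE => /andP[].
split=> // c' hc'.
have ub : forall c, achieves_ejr A k W c -> (c <= n)%N.
  move=> c hc; have := hc 1%N _ N0 coh0.
  rewrite k1 => /(_ erefl) h; apply: (leq_trans h).
  by apply: leq_trans (max_card _) _; rewrite card_ord.
pose P := fun c => if excluded_middle_informative (achieves_ejr A k W c) then true else false.
have PP : forall c, P c -> achieves_ejr A k W c.
  by move=> c; rewrite /P; case: excluded_middle_informative.
have exP : exists c, P c.
  by exists c'; rewrite /P; case: excluded_middle_informative.
have ubP : forall c, P c -> (c <= n)%N by move=> c /PP /ub.
case: (ex_maxnP exP ubP) => d Pd dmax.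
have hd : ejr_degree A k W d.
  split; first exact: PP.
  move=> c hc; apply: dmax; rewrite /P; case: excluded_middle_informative => //.
have := maxc W d Wk hd.
apply: leq_trans; apply: dmax.
by rewrite /P; case: excluded_middle_informative.
Qed.
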